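(* Let $G$ be a countable infinite graph whose maximum degree $\Delta(G)$ is finite. Then $G$ has a proper $k$-total difference labeling for some positive integer $k$ (so $\chi_{td}(G)$ is defined). Moreover, if $M$ is the largest element of a minimal well-spaced row with $\Delta(G)^2+1$ elements, then $\chi_{td}(G)\leq M$.
   Context: For a (possibly infinite) simple graph $G$ and a positive integer $k$, a proper $k$-total difference labeling of $G$ is a function $f: V(G)\to\{1,\dots,k\}$, extended to edges by $f(\{u,v\}) = |f(u)-f(v)|$, such that: (i) adjacent vertices receive different labels; (ii) two distinct edges sharing a vertex receive different labels; (iii) no edge receives the same label as either of its endpoints. $\chi_{td}(G)$ denotes the smallest $k$ for which such a labeling exists. A well-spaced row is a finite set of positive integers such that no element is twice another element and no three distinct elements form an arithmetic progression. A minimal well-spaced row with $m$ elements is a well-spaced row of cardinality $m$ whose maximum element is as small as possible among all well-spaced rows of cardinality $m$. *)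

(* Defs.v *)
From mathcomp Require Import all_boot.
Set Implicit Arguments. Unset Strict Implicit. Unset Printing Implicit Defensive.

Definition simple_graph (V : Type) (adj : rel V) : Prop :=
  (forall u v, adj u v = adj v u) /\ (forall v, ~~ adj v v).

Definition infinite_type (V : Type) : Prop :=
  exists g : nat -> V, injective g.

Definition degree_bound (V : eqType) (adj : rel V) (D : nat) : Prop :=
  forall v (s : seq V), uniq s -> all (adj v) s -> size s <= D.

Definition max_degree (V : eqType) (adj : rel V) (Delta : nat) : Prop :=
  degree_bound adj Delta /\ (forall D, degree_bound adj D -> Delta <= D).

Definition absdiff (a b : nat) : nat := (a - b) + (b - a).

Definition proper_total_diff_labeling (V : eqType) (adj : rel V) (k : nat)
    (f : V -> nat) : Prop :=
  [/\ forall v, 1 <= f v <= k,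
      forall u v, adj u v -> f u != f v,
      forall v u w, adj v u -> adj v w -> u != w ->
        absdiff (f v) (f u) != absdiff (f v) (f w)
    & forall u v, adj u v ->
        (absdiff (f u) (f v) != f u) && (absdiff (f u) (f v) != f v)].

Definition has_td_labeling (V : eqType) (adj : rel V) (k : nat) : Prop :=
  0 < k /\ exists f : V -> nat, proper_total_diff_labeling adj k f.

Definition is_chi_td (V : eqType) (adj : rel V) (k : nat) : Prop :=
  has_td_labeling adj k /\ (forall k', has_td_labeling adj k' -> k <= k').

Definition well_spaced (s : seq nat) : Prop :=
  [/\ uniq s, forall a, a \in s -> 0 < a,
      forall a b, a \in s -> b \in s -> a != b.*2
    & forall a b c, a \in s -> b \in s -> c \in s ->
        a != b -> b != c -> a != c -> a + c != b.*2].

Definition max_elt (s : seq nat) : nat := \max_(x <- s) x.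

Definition minimal_well_spaced (m : nat) (s : seq nat) : Prop :=
  [/\ well_spaced s, size s = m
    & forall t, well_spaced t -> size t = m -> max_elt s <= max_elt t].

(* Main.v *)
Require Import Defs.
From mathcomp Require Import all_boot.
From mathcomp Require Import zify.
From Stdlib Require Import ClassicalEpsilon Classical.
Set Implicit Arguments. Unset Strict Implicit. Unset Printing Implicit Defensive.

Definition pdec (P : Prop) : bool :=
  if excluded_middle_informative P then true else false.

Lemma pdecP (P : Prop) : reflect P (pdec P).
Proof. by rewrite /pdec; case: excluded_middle_informative => h; constructor. Qed.

Definition near (V : Type) (adj : rel V) (u v : V) : Prop :=
  adj u v \/ exists w, adj u w /\ adj w v.

Definition okc (V : countType) (adj : rel V) (n : nat) (prev : seq nat) (v : V)
  (c : nat) : bool :=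
  all (fun u => pdec (near adj u v) ==> (nth 0 prev (pickle u) != c))
    (pmap (@pickle_inv V) (iota 0 n)).

Definition newc (V : countType) (adj : rel V) (nc n : nat) (prev : seq nat) : nat :=
  match (@pickle_inv V n) with
  | Some v => find (okc adj n prev v) (iota 0 nc)
  | None => 0 end.

Fixpoint build (V : countType) (adj : rel V) (nc n : nat) : seq nat :=
  match n with
  | 0 => [::]
  | n'.+1 => rcons (build adj nc n') (newc adj nc n' (build adj nc n'))
  end.

Definition col (V : countType) (adj : rel V) (nc : nat) (v : V) : nat :=
  newc adj nc (pickle v) (build adj nc (pickle v)).

Lemma size_build (V : countType) (adj : rel V) nc n : size (build adj nc n) = n.
Proof. by elim: n => //= n IH; rewrite size_rcons IH. Qed.

Lemma nth_build (V : countType) (adj : rel V) nc n m :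
  m < n -> nth 0 (build adj nc n) m = newc adj nc m (build adj nc m).
Proof.
elim: n => // n IH; rewrite ltnS leq_eqVlt => /orP [/eqP ->|lt] /=.
  by rewrite nth_rcons size_build ltnn eqxx.
by rewrite nth_rcons size_build lt IH.
Qed.

Lemma mem_L0 (V : countType) n (u : V) :
  (u \in pmap (@pickle_inv V) (iota 0 n)) = (pickle u < n).
Proof.
rewrite (can2_mem_pmap (@pickle_invK V) (@pickleK_inv V)) mem_iota.
by rewrite add0n.
Qed.

Lemma col_eq (V : countType) (adj : rel V) nc (v : V) :
  col adj nc v = find (okc adj (pickle v) (build adj nc (pickle v)) v) (iota 0 nc).
Proof. by rewrite /col /newc pickleK_inv. Qed.

Lemma max_nbrs (V : eqType) (adj : rel V) D v : degree_bound adj D ->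
  exists N, [/\ uniq N, all (adj v) N & forall w, adj v w -> w \in N].
Proof.
move=> hD.
suff: forall k, k <= D.+1 -> (exists N, [/\ uniq N, all (adj v) N & forall w, adj v w -> w \in N])
   \/ exists N, [/\ uniq N, all (adj v) N & size N = k].
  move/(_ D.+1 (leqnn _)) => [//|[N [uN aN sN]]].
  by have := hD v N uN aN; rewrite sN ltnn.
elim=> [_|k IH lt]; first by right; exists [::].
case: (IH (ltnW lt)) => [h|[N [uN aN sN]]]; first by left.
case: (classic (forall w, adj v w -> w \in N)) => h; first by left; exists N.
have [w hw] := not_all_ex_not _ _ h.
have [aw nw] := imply_to_and _ _ hw.
right; exists (w :: N); split => //=; first by rewrite uN andbT; apply/negP.
  by rewrite aw aN.
by rewrite sN.
Qed.

Lemma count_bound (V : eqType) (adj : rel V) D v w (L : seq V) :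
  simple_graph adj -> degree_bound adj D -> adj v w -> uniq L ->
  count (predU (pred1 w) (fun u => adj w u && (u != v))) L <= D.
Proof.
move=> [sym irr] hD avw uL.
have h1 := count_predUI (pred1 w) (fun u => adj w u && (u != v)) L.
have h2 : count (pred1 w) L <= 1.
  by have := count_uniq_mem w uL; case: (w \in L) => /= ->.
set F := filter (fun u => adj w u && (u != v)) L.
have h3 : size (v :: F) <= D.
  apply: hD (w) _ _ _.
    rewrite /= filter_uniq // andbT mem_filter; apply/negP => /andP [/andP [_ ]].
    by rewrite eqxx.
  rewrite /= sym avw /=; apply/allP => x; rewrite mem_filter => /andP [/andP [] //].
move: h3; rewrite /= /F size_filter; lia.
Qed.

Lemma cover_bound (V : eqType) (adj : rel V) D v (N : seq V) :
  simple_graph adj -> degree_bound adj D -> all (adj v) N ->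
  forall L : seq V, uniq L ->
  (forall u, u \in L -> has (fun w => predU (pred1 w) (fun u => adj w u && (u != v)) u) N) ->
  size L <= size N * D.
Proof.
move=> sg hD; elim: N => [|w N IH] /=.
  by move=> _ [|x L] // _ /(_ x); rewrite inE eqxx => /(_ isT).
move=> /andP [avw aN] L uL hL.
rewrite -(count_predC (predU (pred1 w) (fun u => adj w u && (u != v)))) mulSn.
apply: leq_add; first exact: count_bound.
rewrite -size_filter; apply: IH => //; first exact: filter_uniq.
move=> u; rewrite mem_filter => /andP [nP /hL] /= /orP [h|//].
by rewrite /= h in nP.
Qed.

Lemma near_bound (V : eqType) (adj : rel V) D v (L : seq V) :
  simple_graph adj -> degree_bound adj D -> uniq L ->
  (forall u, u \in L -> u != v /\ near adj u v) -> size L <= D ^ 2.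
Proof.
move=> sg hD uL hL.
have [N [uN aN mN]] := max_nbrs v hD.
have sN := hD v N uN aN.
have := cover_bound sg hD aN uL.
have [sym _] := sg.
have -> : D ^ 2 = D * D by rewrite expnS expn1.
move=> h; apply: leq_trans (leq_mul sN (leqnn D)); apply: h.
move=> u /hL [nv [auv|[w [auw awv]]]].
  by apply/hasP; exists u; [apply: mN; rewrite sym | rewrite /= eqxx].
apply/hasP; exists w; first by apply: mN; rewrite sym.
by rewrite /= sym auw nv orbT.
Qed.

Lemma has_ok (V : countType) (adj : rel V) D (v : V) n prev :
  simple_graph adj -> degree_bound adj D -> n <= pickle v ->
  has (okc adj n prev v) (iota 0 (D ^ 2 + 1)).
Proof.
move=> sg hD hn; apply/negPn/negP => /hasPn hno.
set L0 := pmap (@pickle_inv V) (iota 0 n).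
set L := filter (fun u => pdec (near adj u v)) L0.
have : size (iota 0 (D ^ 2 + 1)) <= size (map (fun u => nth 0 prev (pickle u)) L).
  apply: uniq_leq_size; first exact: iota_uniq.
  move=> c /hno; rewrite /okc -/L0 => /allPn [u uin].
  rewrite negb_imply negbK => /andP [nr /eqP <-].
  by apply: map_f; rewrite mem_filter nr.
rewrite size_iota size_map.
suff: size L <= D ^ 2 by lia.
apply: (@near_bound _ adj D v L sg hD).
  by apply: filter_uniq; apply: (pmap_uniq (@pickle_invK V)); exact: iota_uniq.
move=> u; rewrite mem_filter mem_L0 => /andP [/pdecP nr lt]; split => //.
apply/negP => /eqP eu; move: lt; rewrite eu => lt; lia.
Qed.

Lemma col_props (V : countType) (adj : rel V) D (v : V) :
  simple_graph adj -> degree_bound adj D ->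
  col adj (D ^ 2 + 1) v < D ^ 2 + 1 /\
  okc adj (pickle v) (build adj (D ^ 2 + 1) (pickle v)) v (col adj (D ^ 2 + 1) v).
Proof.
move=> sg hD; have h := @has_ok V adj D v (pickle v) (build adj (D ^ 2 + 1) (pickle v)) sg hD (leqnn _).
rewrite col_eq; split; first by rewrite has_find size_iota in h.
have := nth_find 0 h; rewrite nth_iota ?add0n //.
by rewrite has_find size_iota in h.
Qed.

Lemma near_sym (V : Type) (adj : rel V) u v :
  simple_graph adj -> near adj u v -> near adj v u.
Proof.
move=> [sym _] [h|[w [h1 h2]]]; first by left; rewrite sym.
by right; exists w; rewrite sym h2 sym h1.
Qed.

Lemma col_near (V : countType) (adj : rel V) D (u v : V) :
  simple_graph adj -> degree_bound adj D -> u != v -> near adj u v ->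
  col adj (D ^ 2 + 1) u != col adj (D ^ 2 + 1) v.
Proof.
move=> sg hD.
wlog lt : u v / pickle u < pickle v.
  move=> W nuv nr.
  have : pickle u != pickle v by apply: contra nuv => /eqP /(pcan_inj (@pickleK V)) ->.
  rewrite neq_ltn => /orP [l|l]; first exact: W.
  by rewrite eq_sym; apply: W l _ _; [rewrite eq_sym | exact: near_sym].
move=> _ nr.
have [_ ok] := col_props v sg hD.
move: ok => /allP /(_ u); rewrite mem_L0 => /(_ lt).
rewrite nth_build // -/(col adj _ u).
by move/implyP; apply; apply/pdecP.
Qed.

Lemma labeling (V : countType) (adj : rel V) D (s : seq nat) :
  simple_graph adj -> degree_bound adj D -> well_spaced s -> size s = D ^ 2 + 1 ->
  has_td_labeling adj (max_elt s).
Proof.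
move=> sg hD [us pos nd nap] ss.
have [sym irr] := sg.
set f := fun v => nth 0 s (col adj (D ^ 2 + 1) v).
have fin v : f v \in s by apply: mem_nth; rewrite ss; case: (col_props v sg hD).
have fle v : f v <= max_elt s by rewrite /max_elt; apply: leq_bigmax_seq (fin v) _.
have fpos v : 0 < f v by apply: pos.
have finj u v : u != v -> near adj u v -> f u != f v.
  move=> nuv nr; rewrite /f nth_uniq ?ss; first exact: col_near.
    by case: (col_props u sg hD).
  by case: (col_props v sg hD).
  by [].
have ne u v : adj u v -> u != v.
  by move=> a; apply/negP => /eqP e; move: a; rewrite e (negbTE (irr v)).
split.
  case: s us pos ss {nd nap fin fle fpos finj f} => [|x s'] _ pos ss; first by move: ss => /=; lia.
  apply: leq_trans (pos x (mem_head _ _)) _.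
  by rewrite /max_elt; apply: leq_bigmax_seq (mem_head _ _) _.
exists f; split.
- by move=> v; rewrite fpos fle.
- by move=> u v a; apply: finj; [exact: ne | left].
- move=> v u w avu avw nuw.
  have h1 : f u != f w by apply: finj => //; right; exists v; rewrite sym avu.
  have h2 : f v != f u by apply: finj; [exact: ne | left].
  have h3 : f v != f w by apply: finj; [exact: ne | left].
  have h4 := nap _ _ _ (fin u) (fin v) (fin w).
  rewrite eq_sym in h2; move: (h4 h2 h3 h1).
  rewrite /absdiff -addnn; move: h1 h2 h3; lia.
- move=> u v a.
  have h1 := nd _ _ (fin v) (fin u).
  have h2 := nd _ _ (fin u) (fin v).
  have := fpos u; have := fpos v.
  move: h1 h2; rewrite /absdiff -!addnn; lia.
Qed.

Lemma row_exists K : exists s, well_spaced s /\ size s = K.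
Proof.
set s := [seq 3 ^ i | i <- iota 0 K].
have sp : forall x y, x \in s -> y \in s -> x < y -> 3 * x <= y.
  move=> x y /mapP [i _ ->] /mapP [j _ ->].
  rewrite ltn_exp2l // => lt.
  by rewrite -expnS leq_exp2l.
have pos : forall a, a \in s -> 0 < a by move=> a /mapP [i _ ->]; rewrite expn_gt0.
exists s; split; last by rewrite size_map size_iota.
split => //.
- by rewrite map_inj_uniq ?iota_uniq //; apply: expnI.
- move=> a b ha hb; have := sp _ _ ha hb; have := sp _ _ hb ha.
  have := pos _ ha; have := pos _ hb; rewrite -addnn; lia.
- move=> a b c ha hb hc nab nbc nac.
  have := sp _ _ ha hb; have := sp _ _ hb ha.
  have := sp _ _ hc hb; have := sp _ _ hb hc.
  have := pos _ ha; have := pos _ hb; have := pos _ hc.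
  move: nab nbc nac; rewrite -addnn; lia.
Qed.

Lemma least_k (P : nat -> Prop) : (exists k, P k) ->
  exists k, P k /\ forall k', P k' -> k <= k'.
Proof.
move=> ex.
have ex' : exists n, pdec (P n) by case: ex => n h; exists n; apply/pdecP.
case: (ex_minnP ex') => m /pdecP Pm hm; exists m; split => // k' /pdecP.
exact: hm.
Qed.

Theorem mainTheorem7 (V : countType) (adj : rel V) (Delta : nat) :
  simple_graph adj -> infinite_type V -> max_degree adj Delta ->
  (exists k, has_td_labeling adj k) /\
  (forall s : seq nat, minimal_well_spaced (Delta ^ 2 + 1) s ->
     exists k, is_chi_td adj k /\ k <= max_elt s).
Proof.
move=> sg _ [hD _].
have ex : exists k, has_td_labeling adj k.
  have [s0 [w0 z0]] := row_exists (Delta ^ 2 + 1).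
  by exists (max_elt s0); apply: labeling sg hD w0 z0.
split => // s [ws ss _].
have hl := labeling sg hD ws ss.
have [k [hk mk]] := least_k ex.
by exists k; split => //; apply: mk.
Qed.
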